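(* Let $a, b$ be positive integers with $b>1$ and let $i \ge 3$ be an integer with $\gcd(r_b(i),a)=1$. Then $\omega \in \operatorname{Ap}(S_a(b,i))$ if and only if either $\omega = b\, a^{(i)}_i$, or there exist $(u_2,\ldots,u_{i-1}) \in R(b,i-1)$ and $u_i \in \{0,\ldots,b-1\}$ such that \[\omega = \sum_{j=2}^{i-1} u_j a^{(i-1)}_j + b^{i-1}\Big(\sum_{j=2}^{i-1} u_j\Big) + u_i\, a^{(i)}_i.\]
   Context: For $\ell \ge 1$, $r_b(\ell) = \sum_{j=0}^{\ell-1} b^j$, and $r_b(0)=0$. For integers $m\ge 2$ and $j\ge 1$, $a^{(m)}_j := r_b(m) + a\, r_b(j-1)$, and $S_a(b,m)$ is the submonoid of $\mathbb{N}$ generated by $\{a^{(m)}_j : j\ge 1\}$. $\operatorname{Ap}(S) = \{\omega\in S : \omega - \operatorname{m}(S) \notin S\}$ where $\operatorname{m}(S)$ is the smallest nonzero element of $S$. For $m\ge 2$, $R(b,m)$ is the set of $(u_2,\ldots,u_m) \in \mathbb{N}^{m-1}$ with $0 \le u_j \le b$ for all $j$, and such that $u_j = b$ implies $u_k = 0$ for all $2\le k<j$. *)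

(* Defs.v *)
From mathcomp Require Import all_boot.
Set Implicit Arguments. Unset Strict Implicit. Unset Printing Implicit Defensive.

Definition rb (b l : nat) : nat := \sum_(0 <= j < l) b ^ j.

Definition agen (a b m j : nat) : nat := rb b m + a * rb b j.-1.

Inductive inS (a b m : nat) : nat -> Prop :=
  | inS0 : inS a b m 0
  | inS_add x j : 1 <= j -> inS a b m x -> inS a b m (x + agen a b m j).

Definition is_mult (S : nat -> Prop) (n : nat) : Prop :=
  S n /\ 0 < n /\ (forall x, S x -> 0 < x -> n <= x).

(* Apery set w.r.t. the multiplicity m(S):
   w \in S and w - m(S) \notin S (as an integer; a negative number is
   never in S, hence the condition m <= w). *)
Definition Ap (S : nat -> Prop) (w : nat) : Prop :=
  S w /\ exists n, is_mult S n /\ ~ (n <= w /\ S (w - n)).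

(* R(b,m): (u_2,...,u_m) with 0 <= u_j <= b and u_j = b -> u_k = 0 for
   2 <= k < j.  Tuples are represented by u : nat -> nat, only the
   indices 2..m being relevant. *)
Definition inR (b m : nat) (u : nat -> nat) : Prop :=
  forall j, 2 <= j <= m ->
    u j <= b /\ (u j = b -> forall k, 2 <= k < j -> u k = 0).

(* Main.v *)
Require Import Defs.
From mathcomp Require Import all_boot zify.

Lemma rb0 b : rb b 0 = 0.
Proof. by rewrite /rb big_geq. Qed.

Lemma rbD b x y : rb b (x + y) = rb b x + b ^ x * rb b y.
Proof.
rewrite /rb (@big_cat_nat _ _ _ x) ?leq_addr //=.
congr (_ + _).
rewrite -{1}(add0n x) big_addn addKn big_distrr /=.
by apply: eq_bigr => j _; rewrite expnD mulnC.
Qed.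

Lemma rb1 b : rb b 1 = 1.
Proof. by rewrite /rb big_nat1. Qed.

Lemma rbS b x : rb b x.+1 = b * rb b x + 1.
Proof. by rewrite -add1n rbD rb1 expn1 addnC. Qed.

Lemma rbSr b x : rb b x.+1 = rb b x + b ^ x.
Proof. by rewrite -addn1 rbD rb1 muln1. Qed.

Lemma rb_gt0 b k : 0 < k -> 0 < rb b k.
Proof. by case: k => // k _; rewrite rbS addn1. Qed.

Lemma rb_mono b m d : rb b m <= rb b (m + d).
Proof. by rewrite rbD leq_addr. Qed.

Lemma rb_lt b k : 0 < b -> 0 < k -> rb b k < rb b k.+1.
Proof.
move=> hb hk; rewrite rbS; have := rb_gt0 b k hk.
have : rb b k <= b * rb b k by rewrite leq_pmull.
lia.
Qed.

Fixpoint Dg (b K n : nat) : nat :=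
  match K with
  | 0 => n
  | K'.+1 => n %/ rb b K'.+1 + Dg b K' (n %% rb b K'.+1)
  end.

Lemma Dg0 b K : Dg b K 0 = 0.
Proof. by elim: K => //= K IH; rewrite div0n mod0n IH. Qed.

Lemma Dg_split b K q n : n < rb b K.+1 -> Dg b K.+1 (q * rb b K.+1 + n) = q + Dg b K n.
Proof.
move=> hn /=; have hW := rb_gt0 b K.+1 (ltn0Sn K).
by rewrite divnMDl // modnMDl divn_small // modn_small // addn0.
Qed.

Lemma Dg_small b K n : n < rb b K.+1 -> Dg b K.+1 n = Dg b K n.
Proof. by move=> hn; have := Dg_split b K 0 n hn; rewrite mul0n add0n. Qed.

Lemma decomp b K n : exists q n', n' < rb b K.+1 /\ n = q * rb b K.+1 + n'.
Proof.
exists (n %/ rb b K.+1), (n %% rb b K.+1); split; last exact: divn_eq.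
by rewrite ltn_pmod // rb_gt0.
Qed.

Lemma DgB b K m : m <= K -> Dg b K (b * rb b m) <= b.
Proof.
elim: K m => [|K IH] m hm.
  by move: hm; rewrite leqn0 => /eqP ->; rewrite rb0 muln0.
case: (ltngtP m K.+1) hm => // [hlt|->] _.
  have h1 : b * rb b m < rb b K.+1.
    have := rb_mono b m.+1 (K.+1 - m.+1); rewrite subnKC // rbS; lia.
  by rewrite Dg_small // IH.
by have := Dg_split b K b 0 (rb_gt0 b K.+1 (ltn0Sn K)); rewrite mulnC addn0 Dg0 addn0 => ->.
Qed.

Lemma Dg_dec b K t : Dg b K t + 1 <= Dg b K t.+1 + b.
Proof.
elim: K t => [|K IH] t /=; first by lia.
have hW := rb_gt0 b K.+1 (ltn0Sn K).
have [q [n' [hn' e]]] := decomp b K t.+1.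
case: n' hn' e => [|n''] hn' e.
  case: q e => [|q'] e; first by rewrite mul0n in e.
  have e2 : t = q' * rb b K.+1 + (rb b K.+1).-1.
    rewrite mulSn addn0 in e. lia.
  have h1 : Dg b K.+1 t.+1 = q'.+1 by rewrite e Dg_split // Dg0 addn0.
  have h2 : Dg b K.+1 t = q' + Dg b K (b * rb b K).
    by rewrite e2 Dg_split ?prednK // ?ltn_predL // rbS addn1.
  rewrite -/(Dg b K.+1 t) -/(Dg b K.+1 t.+1) h1 h2.
  have := DgB b K K (leqnn K). lia.
have e2 : t = q * rb b K.+1 + n''. lia.
have h1 : Dg b K.+1 t.+1 = q + Dg b K n''.+1 by rewrite e Dg_split.
have h2 : Dg b K.+1 t = q + Dg b K n'' by rewrite e2 Dg_split //; apply: ltnW.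
rewrite -/(Dg b K.+1 t) -/(Dg b K.+1 t.+1) h1 h2.
have := IH n''. lia.
Qed.

Lemma rb_ltW b k K : 0 < b -> 0 < k <= K -> rb b k < rb b K.+1.
Proof.
move=> hb /andP [hk hkK].
have := rb_lt b k hb hk; have := rb_mono b k.+1 (K.+1 - k.+1).
rewrite subnKC //; lia.
Qed.

Lemma Dg_wrap b K k n : 0 < b -> 0 < k <= K -> n < rb b K.+1 ->
  rb b K.+1 <= n + rb b k -> Dg b K (n + rb b k - rb b K.+1) <= Dg b K n.
Proof.
move=> hb; elim: K k n => [|K IH] k n hk; first by move: hk; lia.
have hW := rb_gt0 b K.+1 (ltn0Sn K).
set W := rb b K.+1.
rewrite (rbS b K.+1) -/W => hn hwr.
have [q [n' [hn' e]]] := decomp b K n.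
rewrite -/W in hn' e.
have hDn : Dg b K.+1 n = q + Dg b K n' by rewrite e Dg_split.
rewrite hDn.
have hqb : q <= b.
  rewrite leqNgt; apply/negP => H; have := leq_mul H (leqnn W); rewrite mulSn; lia.
have hqb0 : q = b -> n' = 0 by move=> hq; rewrite hq in e; lia.
have hWK : W = b * rb b K + 1 by rewrite /W rbS.
have [hkeq|hkK] : k = K.+1 \/ k < K.+1 by move: hk; lia.
-
  subst k.
  have [hqe|hq] : q = b \/ q < b by lia.
    subst q.
    have hn0 : n' = 0 by apply: hqb0.
    have -> : n + W - (b * W + 1) = b * rb b K.
      by rewrite e hn0 hWK; lia.
    rewrite hn0 Dg0 addn0; apply: DgB; lia.
  have hq1 : q.+1 = b.
    apply/eqP; rewrite eqn_leq hq /= leqNgt; apply/negP => H.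
    have := leq_mul H (leqnn W); rewrite !mulSn; lia.
  have ebW : b * W = W + q * W by rewrite -hq1 mulSn.
  have hv : n + W - (b * W + 1) = n'.-1 by rewrite e ebW; lia.
  rewrite hv Dg_small; last by lia.
  have h1 : n' = n'.-1.+1 by lia.
  have := Dg_dec b K n'.-1; rewrite -h1; lia.
-
  have hkK' : 0 < k <= K by move: hk hkK; lia.
  have hwk : rb b k < W := rb_ltW b k K hb hkK'.
  case: (ltnP (n' + rb b k) W) => hsub.
  + have [hq|hqe] : q < b \/ q = b by lia.
      have := leq_mul hq (leqnn W); rewrite !mulSn; lia.
    subst q. have hn0 := hqb0 (erefl _).
    case: k hk hkK hkK' hwk hsub hwr => // k' hk hkK hkK' hwk hsub hwr.
    have -> : n + rb b k'.+1 - (b * W + 1) = b * rb b k'.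
      rewrite e hn0 rbS; lia.
    rewrite hn0 Dg0 addn0; apply: DgB; lia.
  + have hIH := IH k n' hkK' hn' hsub.
    set t := n' + rb b k - W in hIH.
    have hq : q < b.
      have [//|hqe] : q < b \/ q = b by lia.
      subst q; rewrite (hqb0 (erefl _)) in hsub; lia.
    have hq1 : q.+1 = b.
      apply/eqP; rewrite eqn_leq hq /= leqNgt; apply/negP => H.
      have := leq_mul H (leqnn W); rewrite !mulSn; rewrite /t in hIH; lia.
    have ebW : b * W = W + q * W by rewrite -hq1 mulSn.
    have hv : n + rb b k - (b * W + 1) = t.-1 by rewrite e ebW /t; lia.
    rewrite hv Dg_small; last by rewrite /t; lia.
    have h1 : t = t.-1.+1 by rewrite /t; lia.
    have := Dg_dec b K t.-1; rewrite -h1; lia.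
Qed.

Lemma Dg_inc b K k n : 0 < b -> 0 < k <= K -> Dg b K (n + rb b k) <= Dg b K n + 1.
Proof.
move=> hb; elim: K k n => [|K IH] k n hk; first by move: hk; lia.
have hW := rb_gt0 b K.+1 (ltn0Sn K).
set W := rb b K.+1.
have [q [n' [hn' e]]] := decomp b K n.
rewrite -/W in hn' e.
have hDn : Dg b K.+1 n = q + Dg b K n' by rewrite e Dg_split.
rewrite hDn.
have [hkeq|hkK] : k = K.+1 \/ k < K.+1 by move: hk; lia.
- subst k. have -> : n + W = q.+1 * W + n' by rewrite e mulSn; lia.
  rewrite Dg_split //; lia.
- have hkK' : 0 < k <= K by move: hk hkK; lia.
  case: (ltnP (n' + rb b k) W) => hsub.
  + have -> : n + rb b k = q * W + (n' + rb b k) by rewrite e addnA.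
    rewrite Dg_split //; have := IH k n' hkK'; lia.
  + have hwk : rb b k < W := rb_ltW b k K hb hkK'.
    have -> : n + rb b k = q.+1 * W + (n' + rb b k - W) by rewrite e mulSn; lia.
    rewrite Dg_split; last by lia.
    have := Dg_wrap b K k n' hb hkK' hn' hsub; rewrite -/W; lia.
Qed.

Lemma inS_addS a b m x y : inS a b m x -> inS a b m y -> inS a b m (x + y).
Proof.
move=> hx; elim=> [|y0 j hj hy IH]; first by rewrite addn0.
by rewrite addnA; apply: inS_add.
Qed.

Lemma inS_mulg a b m c j : 0 < j -> inS a b m (c * agen a b m j).
Proof.
move=> hj; elim: c => [|c IH]; first by rewrite mul0n; apply: inS0.
by rewrite mulSn addnC; apply: inS_add.
Qed.

Definition F a b K n := rb b K.+1 * Dg b K n + a * n.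

Lemma FA a b K K' n : inS a b K.+1 (rb b K.+1 * Dg b K' n + a * n).
Proof.
elim: K' n => [|K' IH] n /=.
  have -> : rb b K.+1 * n + a * n = n * agen a b K.+1 2 by rewrite /agen /= rb1; lia.
  exact: inS_mulg.
have [q [n' [hn' e]]] := decomp b K' n.
have -> : n %/ rb b K'.+1 + Dg b K' (n %% rb b K'.+1) = Dg b K'.+1 n by [].
rewrite e Dg_split //.
have -> : rb b K.+1 * (q + Dg b K' n') + a * (q * rb b K'.+1 + n') =
          (rb b K.+1 * Dg b K' n' + a * n') + q * agen a b K.+1 K'.+2.
  rewrite /agen /=; lia.
apply: inS_addS => //; exact: inS_mulg.
Qed.

Lemma core a b K j : 0 < b -> 0 < j -> forall n, n < rb b K.+1 ->
  exists n2 c, n2 < rb b K.+1 /\ F a b K n + agen a b K.+1 j = F a b K n2 + c * rb b K.+1.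
Proof.
move=> hb; have hr := rb_gt0 b K.+1 (ltn0Sn K).
set r := rb b K.+1.
elim: j {-2}j (leqnn j) => [|N IH] j hjN hj n hn; first by move: hj hjN; lia.
have [hj1|[hjK|hjbig]] : j = 1 \/ (1 < j <= K.+1) \/ K.+1 < j by lia.
- subst j; exists n, 1; split => //; rewrite /agen rb0 /=; lia.
- set k := j.-1.
  have hk : 0 < k <= K by rewrite /k; lia.
  have hg : agen a b K.+1 j = r + a * rb b k by [].
  have hwk : rb b k < r := rb_ltW b k K hb hk.
  case: (ltnP (n + rb b k) r) => hm.
  + have hD := Dg_inc b K k n hb hk.
    exists (n + rb b k), (Dg b K n + 1 - Dg b K (n + rb b k)); split => //.
    rewrite hg /F; set d := Dg b K (n + rb b k); set d0 := Dg b K n.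
    rewrite mulnBl mulnDl mul1n; rewrite -/d in hD.
    have := leq_mul hD (leqnn r); rewrite mulnDl mul1n.
    lia.
  + have hD := Dg_wrap b K k n hb hk hn hm.
    exists (n + rb b k - r), (Dg b K n + 1 + a - Dg b K (n + rb b k - r)); split.
      lia.
    rewrite hg /F; set d := Dg b K (n + rb b k - r); set d0 := Dg b K n.
    rewrite -/r -/d in hD.
    rewrite mulnBl !mulnDl mul1n.
    have := leq_mul hD (leqnn r).
    have : a * (n + rb b k - r) + a * r = a * n + a * rb b k by rewrite -mulnDr subnK // mulnDr.
    lia.
- set j' := j - K.+1.
  have hj' : 0 < j' by rewrite /j'; lia.
  have [n2 [c [hn2 e]]] := IH j' (ltac:(rewrite /j'; lia)) hj' n hn.
  exists n2, (c + a * b ^ j'.-1); split => //.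
  have -> : agen a b K.+1 j = agen a b K.+1 j' + a * b ^ j'.-1 * r.
    rewrite /agen.
    have -> : j.-1 = j'.-1 + K.+1 by rewrite /j'; lia.
    rewrite rbD -/r; lia.
  rewrite addnA e mulnDl; lia.
Qed.

Lemma inj_mod_le a r n n2 : coprime r a -> n < r -> n2 <= n ->
  (a * n) %% r = (a * n2) %% r -> n = n2.
Proof.
move=> hc hn hle e.
have : (a * n == a * n2 %[mod r]) by apply/eqP.
rewrite eqn_mod_dvd ?leq_mul2l ?hle ?orbT // -mulnBr Gauss_dvdr //.
case: (posnP (n - n2)) => [h0|hpos] hd; first by lia.
have := dvdn_leq hpos hd; lia.
Qed.

Lemma inj_mod a r n n2 : coprime r a -> n < r -> n2 < r ->
  (a * n) %% r = (a * n2) %% r -> n = n2.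
Proof.
move=> hc hn hn2 e; case: (leqP n2 n) => h.
  exact: inj_mod_le _ _ _ _ hc hn h e.
by apply/esym; apply: (inj_mod_le _ _ _ _ hc hn2 (ltnW h) (esym e)).
Qed.

Lemma FB a b K s : 0 < b -> inS a b K.+1 s ->
  exists n c, n < rb b K.+1 /\ s = F a b K n + c * rb b K.+1.
Proof.
move=> hb; elim=> [|s' j hj hs' [n [c [hn e]]]].
  exists 0, 0; split; first exact: rb_gt0.
  by rewrite /F Dg0 !muln0.
have [n2 [c2 [hn2 e2]]] := core a b K j hb hj n hn.
exists n2, (c2 + c); split => //.
by rewrite e -addnA [c * _ + _]addnC addnA e2 mulnDl addnA.
Qed.

Lemma inS_ge a b m x : inS a b m x -> 0 < x -> rb b m <= x.
Proof.
elim=> // x0 j hj _ _ _; rewrite /agen; lia.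
Qed.

Lemma mult_r a b K : is_mult (inS a b K.+1) (rb b K.+1).
Proof.
split; last split.
- have := inS_add (ltn0Sn 0) (inS0 a b K.+1).
  by rewrite /agen /= rb0 muln0 !addn0.
- exact: rb_gt0.
- exact: inS_ge.
Qed.

Lemma mult_uniq a b K n0 : is_mult (inS a b K.+1) n0 -> n0 = rb b K.+1.
Proof.
move=> [h1 [h2 h3]]; have [g1 [g2 g3]] := mult_r a b K.
have := h3 _ g1 g2; have := g3 _ h1 h2; lia.
Qed.

Lemma F_mod a b K n : F a b K n %% rb b K.+1 = (a * n) %% rb b K.+1.
Proof. by rewrite /F mulnC modnMDl. Qed.

Lemma ApF a b K w : 0 < b -> coprime (rb b K.+1) a ->
  Ap (inS a b K.+1) w <-> exists n, n < rb b K.+1 /\ w = F a b K n.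
Proof.
move=> hb hc; set r := rb b K.+1; split.
- move=> [hw [n0 [hm hn]]].
  have er := mult_uniq _ _ _ _ hm; rewrite -/r in er; subst n0.
  have [n [c [hn' e]]] := FB _ _ _ _ hb hw.
  exists n; split => //.
  case: c e => [|c] e; first by rewrite e mul0n addn0.
  exfalso; apply: hn; split; first by rewrite e mulSn; lia.
  have -> : w - r = F a b K n + c * r by rewrite e mulSn; lia.
  apply: inS_addS; first exact: FA.
  rewrite /r; elim: c {e} => [|c IH]; first by rewrite mul0n; apply: inS0.
  rewrite mulSn addnC; have := inS_add (ltn0Sn 0) IH.
  by rewrite /agen /= rb0 muln0 addn0.
- move=> [n [hn ->]]; split; first exact: FA.
  exists r; split; first exact: mult_r.
  move=> [hle hS].
  have [n2 [c [hn2 e]]] := FB _ _ _ _ hb hS.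
  have e2 : F a b K n = F a b K n2 + c.+1 * r by rewrite mulSn; lia.
  have hmod : (a * n) %% r = (a * n2) %% r.
    by rewrite -!F_mod -/r e2 addnC modnMDl.
  have hnn := inj_mod _ _ _ _ hc hn hn2 hmod; subst n2.
  move: e2; lia.
Qed.
Arguments Dg : simpl never.

Lemma term_le_sum (f : nat -> nat) m k n : m <= k < n -> f k <= \sum_(m <= j < n) f j.
Proof.
move=> /andP [h1 h2].
rewrite (@big_cat_nat _ _ _ k) //=; last by apply: ltnW.
rewrite [X in _ <= _ + X]big_ltn //; lia.
Qed.

Lemma inR_mono b m u : inR b m.+1 u -> inR b m u.
Proof. by move=> h j hj; apply: h; move: hj; lia. Qed.

Lemma D1 b K u : 0 < b -> inR b K.+1 u ->
  \sum_(2 <= j < K.+2) u j * rb b j.-1 < rb b K.+1 /\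
  Dg b K (\sum_(2 <= j < K.+2) u j * rb b j.-1) = \sum_(2 <= j < K.+2) u j.
Proof.
move=> hb; elim: K u => [|K IH] u hu.
  by rewrite !big_geq // rb1.
have [h1 h2] := IH u (inR_mono _ _ _ hu).
rewrite !(@big_nat_recr _ _ _ K.+2) //=.
have hW := rb_gt0 b K.+1 (ltn0Sn K).
have [hd hdb] := hu K.+2 (ltac:(lia)).
set n' := \sum_(2 <= j < K.+2) u j * rb b j.-1 in h1 h2 *.
split.
  rewrite (rbS b K.+1).
  have [hdeq|hdlt] : u K.+2 = b \/ u K.+2 < b by lia.
    have hn0 : n' = 0.
      rewrite /n' big_nat_cond big1 // => j /andP [/andP [j1 j2] _].
      by rewrite (hdb hdeq j) ?mul0n //; lia.
    rewrite hn0 hdeq; lia.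
  have := leq_mul hdlt (leqnn (rb b K.+1)); rewrite mulSn; lia.
by rewrite addnC Dg_split // h2 addnC.
Qed.

Lemma D2 b K n : 0 < b -> n < rb b K.+1 ->
  exists u, inR b K.+1 u /\ n = \sum_(2 <= j < K.+2) u j * rb b j.-1.
Proof.
move=> hb; elim: K n => [|K IH] n hn.
  exists (fun _ => 0); split; first by move=> j; lia.
  by rewrite big_geq //; move: hn; rewrite rb1; lia.
have hW := rb_gt0 b K.+1 (ltn0Sn K).
have [q [n' [hn' e]]] := decomp b K n.
have [u' [hu' e']] := IH n' hn'.
move: hn; rewrite rbS => hn.
have hqb : q <= b.
  rewrite leqNgt; apply/negP => H; have := leq_mul H (leqnn (rb b K.+1)); rewrite mulSn; lia.
have hqb0 : q = b -> n' = 0 by move=> hq; rewrite hq in e; lia.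
exists (fun j => if j == K.+2 then q else u' j); split.
  move=> j hj.
  case: (eqVneq j K.+2) => [->|hne].
    split => // hq k hk.
    have h0 : u' k * rb b k.-1 = 0.
      have := term_le_sum (fun j => u' j * rb b j.-1) 2 k K.+2 (ltac:(lia)).
      rewrite -e' (hqb0 hq); lia.
    have := rb_gt0 b k.-1 (ltac:(lia)).
    have -> : (k == K.+2) = false by apply/negbTE; lia.
    move=> hr; move: h0; case: (u' k) => // x; rewrite mulSn; lia.
  have [h1 h2] := hu' j (ltac:(move: hj hne; lia)).
  split => // hq k hk.
  have -> : (k == K.+2) = false by apply/negbTE; lia.
  exact: h2.
rewrite big_nat_recr //= eqxx e e' addnC mulnC.
congr (_ + _).
apply: eq_big_nat => j hj.
by have -> : (j == K.+2) = false by apply/negbTE; lia.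
Qed.

Lemma Ftop a b K : 0 < K -> F a b K (b * rb b K) = b * agen a b K.+1 K.+1.
Proof.
case: K => // K _.
rewrite /F -[b * rb b K.+1]addn0 Dg_split ?rb_gt0 // Dg0 addn0 /agen /=; lia.
Qed.

Lemma ident a b K u : 0 < K ->
  \sum_(2 <= j < K.+1) u j * agen a b K j + b ^ K * \sum_(2 <= j < K.+1) u j
  + u K.+1 * agen a b K.+1 K.+1 =
  rb b K.+1 * \sum_(2 <= j < K.+2) u j + a * \sum_(2 <= j < K.+2) u j * rb b j.-1.
Proof.
move=> hK.
have hs : \sum_(2 <= j < K.+1) u j * agen a b K j =
   rb b K * \sum_(2 <= j < K.+1) u j + a * \sum_(2 <= j < K.+1) u j * rb b j.-1.
  rewrite !big_distrr -big_split; apply: eq_bigr => j _; rewrite /agen /=; lia.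
rewrite hs (@big_nat_recr _ _ _ K.+1) // (@big_nat_recr _ _ _ K.+1) //.
rewrite /agen rbSr /=.
set s1 := \sum_(2 <= j < K.+1) u j.
set s2 := \sum_(2 <= j < K.+1) u j * rb b j.-1.
lia.
Qed.

Theorem corollary18 (a b i : nat) :
  0 < a -> 1 < b -> 3 <= i -> coprime (rb b i) a ->
  forall w : nat,
    Ap (inS a b i) w <->
    (w = b * agen a b i i \/
     exists u : nat -> nat,
       inR b i.-1 u /\ u i < b /\
       w = \sum_(2 <= j < i) u j * agen a b i.-1 j
           + b ^ i.-1 * (\sum_(2 <= j < i) u j)
           + u i * agen a b i i).
Proof.
move=> ha hb hi; case: i hi => [//|K] hi hc w.
have hb0 : 0 < b by lia.
have hK : 0 < K by lia.
rewrite (ApF _ _ _ _ hb0 hc).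
have hr1 : rb b K.+1 = b * rb b K + 1 by rewrite rbS.
rewrite -[K.+1.-1]/K.
split.
- move=> [n [hn ->]].
  have [hntop|hnlt] : n = b * rb b K \/ n < b * rb b K by lia.
    by left; rewrite hntop Ftop.
  right.
  have [u [hu en]] := D2 b K n hb0 hn.
  have [_ hD] := D1 b K u hb0 hu.
  exists u; split; first exact: inR_mono.
  split.
    have [hd hdb] := hu K.+1 (ltac:(lia)).
    have [//|hdeq] : u K.+1 < b \/ u K.+1 = b by lia.
    exfalso.
    have hlow : \sum_(2 <= j < K.+1) u j * rb b j.-1 = 0.
      rewrite big_nat_cond big1 // => j /andP [/andP [j1 j2] _].
      by rewrite (hdb hdeq j) ?mul0n //; lia.
    move: en; rewrite (@big_nat_recr _ _ _ K.+1) //= hlow hdeq; lia.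
  by rewrite ident // /F en hD.
- move=> [->|[u [hu [hub ->]]]].
    exists (b * rb b K); split; first lia.
    by rewrite Ftop.
  have hu' : inR b K.+1 u.
    move=> j hj.
    have [->|hjl] : j = K.+1 \/ j <= K by lia.
      by split; [apply: ltnW | move=> h; move: hub; rewrite h ltnn].
    exact: (hu j (ltac:(lia))).
  have [h1 h2] := D1 b K u hb0 hu'.
  exists (\sum_(2 <= j < K.+2) u j * rb b j.-1); split => //.
  by rewrite ident // /F h2.
Qed.
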